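(* Let $n$ be an odd integer greater than $1$. Then \[ \sum_{k=0}^{n-1}[4k+1]\frac{(q;q^2)_k^2}{(q^2;q^2)_k^2} q^{-k} \equiv q[n]^2\pmod{[n]^2\Phi_n(q)}, \] and \[ \sum_{k=0}^{n-1}[4k-1]\frac{(q^{-1};q^2)_k^2}{(q^2;q^2)_k^2} q^{k} \equiv -[n]^2\pmod{[n]^2\Phi_n(q)}. \]
   Context: $q$ is an indeterminate. The $q$-shifted factorial is $(a;q)_k=(1-a)(1-aq)\cdots(1-aq^{k-1})$ (with $(a;q)_0=1$). For any integer $m$ (including negative $m$), the $q$-integer is $[m]=(1-q^m)/(1-q)$; in particular $[-1]=-1/q$. $\Phi_n(q)$ denotes the $n$-th cyclotomic polynomial. A congruence $A(q)\equiv B(q)\pmod{P(q)}$ between rational functions in $q$ whose denominators are coprime to the polynomial $P(q)$ means that $P(q)$ divides the numerator of $A(q)-B(q)$ (written in lowest terms) in $\mathbb{Z}[q]$. *)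

(* Defs.v *)
From HB Require Import structures.
From mathcomp Require Import all_boot all_order all_algebra all_field.
Set Implicit Arguments. Unset Strict Implicit. Unset Printing Implicit Defensive.
Import Order.TTheory GRing.Theory Num.Theory.
Local Open Scope ring_scope.

From mathcomp Require Import fraction.
Definition RF := {fraction {poly rat}}.
Notation tof := (@FracField.tofrac _).
Notation "x %:F" := (tof x) : ring_scope.

Definition qq : RF := ('X : {poly rat})%:F.

Definition qpoch (a b : RF) (k : nat) : RF := \prod_(i < k) (1 - a * b ^+ i).

Definition qint (m : int) : RF := (1 - qq ^ m) / (1 - qq).

Definition qintp (n : nat) : {poly rat} := \sum_(i < n) 'X^i.

Definition Phi (n : nat) : {poly rat} := map_poly (intr : int -> rat) 'Phi_n.

Definition qcong (A B : RF) (P : {poly rat}) : Prop :=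
  exists N D : {poly rat}, [/\ D != 0, coprimep D P, P %| N & A - B = N%:F / D%:F].

(* Main.v *)
Require Import Defs.
From HB Require Import structures.
From mathcomp Require Import all_boot all_order all_algebra all_field.
From mathcomp Require Import ring zify.
Import Order.TTheory GRing.Theory Num.Theory.
Local Open Scope ring_scope.

Definition Fp k : {poly rat} := \prod_(i < k) (1 - 'X^(i.+1)).
Definition Gp k : {poly rat} := \prod_(i < k) (1 + 'X^(i.+1)).
Definition Po k : {poly rat} := \prod_(i < k) (1 - 'X^((2*i).+1)%N).
Definition Pe k : {poly rat} := \prod_(i < k) (1 - 'X^((2*i).+2)%N).

Fixpoint qb (N k : nat) : {poly rat} :=
  match k with
  | 0 => 1
  | k'.+1 => match N with
             | 0 => 0
             | N'.+1 => qb N' k' + 'X^(k'.+1) * qb N' k'.+1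
             end
  end.

Lemma qb_big N k : (N < k)%N -> qb N k = 0.
Proof.
elim: N k => [|N IH] [|k] //= H.
by rewrite !IH // ?mulr0 ?addr0 // ltnW.
Qed.

Lemma FpS k : Fp k.+1 = Fp k * (1 - 'X^(k.+1)).
Proof. by rewrite /Fp big_ord_recr. Qed.
Lemma GpS k : Gp k.+1 = Gp k * (1 + 'X^(k.+1)).
Proof. by rewrite /Gp big_ord_recr. Qed.
Lemma PoS k : Po k.+1 = Po k * (1 - 'X^((2*k).+1)%N).
Proof. by rewrite /Po big_ord_recr. Qed.
Lemma PeS k : Pe k.+1 = Pe k * (1 - 'X^((2*k).+2)%N).
Proof. by rewrite /Pe big_ord_recr. Qed.

Lemma qbF N k : (k <= N)%N -> qb N k * Fp k * Fp (N - k) = Fp N.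
Proof.
elim: N k => [|N IH] [|k] //= Hk.
- by rewrite /Fp !big_ord0 !mulr1.
- by rewrite subn0 /Fp big_ord0 !mul1r.
- have [->|ltkN] := eqVneq k N.
    rewrite (@qb_big N N.+1 (ltnSn N)) mulr0 addr0 subnn FpS.
    have := IH N (leqnn N); rewrite subnn => E.
    transitivity ((qb N N * Fp N * Fp 0) * (1 - 'X^(N.+1))); first ring.
    by rewrite E.
  have ltk : (k < N)%N by rewrite ltn_neqAle ltkN.
  have E1 := IH k (ltnW ltk).
  have E2 := IH k.+1 ltk.
  have Hs : (N - k = (N - k.+1).+1)%N by rewrite subnSK.
  have HX : 'X^(k.+1) * 'X^((N - k.+1).+1) = 'X^(N.+1) :> {poly rat}.
    by rewrite -exprD; congr (_ ^+ _); rewrite addnS subnKC.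
  rewrite subSS.
  transitivity ((qb N k * Fp k * Fp (N - k)) * (1 - 'X^(k.+1))
     + (qb N k.+1 * Fp k.+1 * Fp (N - k.+1)) * ('X^(k.+1) * (1 - 'X^((N - k.+1).+1)))).
    rewrite Hs !FpS; ring.
  rewrite E1 E2 FpS -HX; ring.
Qed.

Lemma PeFG k : Pe k = Fp k * Gp k.
Proof.
elim: k => [|k IH]; first by rewrite /Pe /Fp /Gp !big_ord0 mulr1.
rewrite PeS FpS GpS IH.
have -> : 'X^((2*k).+2)%N = ('X^(k.+1))^+2 :> {poly rat}.
  by rewrite -exprM; congr (_ ^+ _); rewrite [RHS]mulnC mulnS add2n.
ring.
Qed.

Lemma PoPe k : Po k * Pe k = Fp (2 * k).
Proof.
elim: k => [|k IH]; first by rewrite /Pe /Fp /Po !big_ord0 mulr1.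
by rewrite PoS PeS mulnS add2n !FpS -IH; ring.
Qed.

Lemma nz_at0 (p : {poly rat}) : p.[0] = 1 -> p != 0.
Proof. by move=> H; apply/eqP=> E; move: H; rewrite E horner0 => /eqP; rewrite eq_sym oner_eq0. Qed.

Lemma prod_at0 (k : nat) (P : pred 'I_k) (F : 'I_k -> {poly rat}) :
  (forall i, (F i).[0] = 1) -> (\prod_(i < k | P i) F i).[0] = 1.
Proof. by move=> H; rewrite horner_prod; apply: big1 => i _; apply: H. Qed.

Lemma BX0 (m : nat) : (1 - 'X^(m.+1) : {poly rat}).[0] = 1.
Proof. by rewrite !hornerE expr0n subr0. Qed.
Lemma BX0' (m : nat) : (1 + 'X^(m.+1) : {poly rat}).[0] = 1.
Proof. by rewrite !hornerE expr0n addr0. Qed.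

Lemma Fp_nz k : Fp k != 0. Proof. by apply/nz_at0/prod_at0 => i; apply: BX0. Qed.
Lemma Gp_nz k : Gp k != 0. Proof. by apply/nz_at0/prod_at0 => i; apply: BX0'. Qed.
Lemma Po_nz k : Po k != 0. Proof. by apply/nz_at0/prod_at0 => i; apply: BX0. Qed.
Lemma Pe_nz k : Pe k != 0. Proof. by apply/nz_at0/prod_at0 => i; apply: BX0. Qed.

Lemma Key1 n : Po n * Gp n ^+ 2 = qb (2 * n) n * Pe n.
Proof.
apply: (mulIf (expf_neq0 2 (Fp_nz n))).
have E := @qbF (2 * n)%N n (leq_pmull n (isT : (0 < 2)%N)).
have H2 : (2 * n - n = n)%N by rewrite mul2n -addnn addnK.
rewrite H2 in E.
transitivity (Po n * Pe n * Pe n); first by rewrite PeFG; ring.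
by rewrite PoPe -E; ring.
Qed.

Definition Ep m : {poly rat} := Gp m ^+ 2 * (1 + 'X^(m.+1)).
Definition Op m h : {poly rat} := \prod_(i < m.+1 | (i : nat) != h) (1 - 'X^((2*i).+1)%N).

Lemma Po_split m h : (2 * h).+1 = m.+1 -> Po m.+1 = (1 - 'X^(m.+1)) * Op m h.
Proof.
move=> Hh.
have hl : (h < m.+1)%N by rewrite -Hh ltnS -{1}(mul1n h) leq_mul2r orbT.
rewrite /Po (bigD1 (Ordinal hl)) //= Hh; congr (_ * _).
Qed.

Lemma Key2 m h : (2 * h).+1 = m.+1 -> qb (2 * m.+1) m.+1 * Pe m = Op m h * Ep m.
Proof.
move=> Hh.
have nz : (1 - 'X^(m.+1)) * (1 + 'X^(m.+1)) != 0 :> {poly rat}.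
  by apply/nz_at0; rewrite hornerM BX0 BX0' mulr1.
apply: (mulIf nz).
have K := Key1 m.+1.
rewrite (Po_split m h Hh) GpS PeS in K.
have EX : 'X^((2 * m).+2) = ('X^(m.+1))^+2 :> {poly rat}.
  by rewrite -exprM; congr (_ ^+ _); rewrite [RHS]mulnC mulnS add2n.
rewrite EX in K.
transitivity (qb (2 * m.+1) m.+1 * (Pe m * (1 - 'X^(m.+1) ^+ 2))); first ring.
rewrite -K /Ep; ring.
Qed.


Notation ev x p := ((map_poly (ratr : rat -> algC) p).[x]).

Lemma ev_1mX (x : algC) k : ev x (1 - 'X^k) = 1 - x ^+ k.
Proof. by rewrite rmorphB rmorph1 rmorphXn /= map_polyX !hornerE. Qed.
Lemma ev_1pX (x : algC) k : ev x (1 + 'X^k) = 1 + x ^+ k.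
Proof. by rewrite rmorphD rmorph1 rmorphXn /= map_polyX !hornerE. Qed.
Lemma ev_prod (x : algC) k (P : pred 'I_k) (F : 'I_k -> {poly rat}) :
  ev x (\prod_(i < k | P i) F i) = \prod_(i < k | P i) ev x (F i).
Proof. by rewrite rmorph_prod /= horner_prod. Qed.
Lemma ev_M (x : algC) p q : ev x (p * q) = ev x p * ev x q.
Proof. by rewrite rmorphM /= hornerM. Qed.
Lemma ev_X (x : algC) k : ev x ('X^k) = x ^+ k.
Proof. by rewrite rmorphXn /= map_polyX hornerXn. Qed.
Lemma ev_B (x : algC) p q : ev x (p - q) = ev x p - ev x q.
Proof. by rewrite rmorphB /= hornerD hornerN. Qed.
Lemma ev_Xn (x : algC) p k : ev x (p ^+ k) = ev x p ^+ k.
Proof. by rewrite rmorphXn /= horner_exp. Qed.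
Lemma ev_qintp (x : algC) k : ev x (qintp k) = \sum_(i < k) x ^+ i.
Proof. by rewrite /qintp rmorph_sum /= horner_sum; apply: eq_bigr => i _; rewrite ev_X. Qed.


Lemma n_gt0 h : (0 < (2 * h).+1)%N. Proof. by []. Qed.

Definition sgm h (j : 'I_((2 * h).+1)) : 'I_((2 * h).+1) := Ordinal (ltn_pmod (2 * j) (n_gt0 h)).
Definition sgmi h (j : 'I_((2 * h).+1)) : 'I_((2 * h).+1) := Ordinal (ltn_pmod ((h + 1) * j) (n_gt0 h)).
Definition tau h (j : 'I_((2 * h).+1)) : 'I_((2 * h).+1) := Ordinal (ltn_pmod ((2 * j).+1) (n_gt0 h)).
Definition taui h (j : 'I_((2 * h).+1)) : 'I_((2 * h).+1) := Ordinal (ltn_pmod ((h + 1) * (j + 2 * h)) (n_gt0 h)).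

Lemma sgmK h : cancel (sgm h) (sgmi h).
Proof.
move=> j; apply: val_inj => /=.
rewrite modnMmr mulnA.
have -> : ((h + 1) * 2 * j = j + j * (2 * h).+1)%N by nia.
by rewrite addnC modnMDl modn_small.
Qed.

Lemma tauK h : cancel (tau h) (taui h).
Proof.
move=> j; apply: val_inj => /=.
rewrite -modnMmr modnDml modnMmr.
have -> : ((h + 1) * ((2 * j).+1 + 2 * h) = j + (j + h + 1) * (2 * h).+1)%N by nia.
by rewrite addnC modnMDl modn_small.
Qed.

Lemma sgm_inj h : injective (sgm h). Proof. exact: can_inj (sgmK h). Qed.
Lemma tau_inj h : injective (tau h). Proof. exact: can_inj (tauK h). Qed.

Definition Pi h (z : algC) := \prod_(r < (2 * h).+1 | (r : nat) != 0%N) (1 - z ^+ r).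

Lemma Pi_nz h (z : algC) (pz : ((2 * h).+1).-primitive_root z) : Pi h z != 0.
Proof.
rewrite prodf_seq_neq0; apply/allP => r _; apply/implyP => r0.
rewrite subr_eq0 eq_sym -(prim_order_dvd pz); apply/negP => /dvdn_leq.
by rewrite lt0n r0 leqNgt ltn_ord => /(_ isT).
Qed.

Lemma ev_Pe h (z : algC) (pz : ((2 * h).+1).-primitive_root z) : ev z (Pe (2 * h)) = Pi h z.
Proof.
rewrite /Pi (reindex_inj (sgm_inj h)) /=.
have E : forall j : 'I_((2 * h).+1), ((2 * j) %% (2 * h).+1 == 0)%N = (j == 0 :> nat).
  move=> j; apply/eqP/eqP => [H|->]; last by rewrite muln0 mod0n.
  have : sgm h j = sgm h ord0 by apply: val_inj; rewrite /= H muln0 mod0n.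
  by move/(@sgm_inj h) => ->.
under eq_bigl => j do rewrite E.
under eq_bigr => j _ do rewrite (prim_expr_mod pz).
rewrite /Pe ev_prod big_mkcond [RHS]big_mkcond big_ord_recl /= mul1r.
apply: eq_bigr => i _; rewrite ev_1mX /bump /=; congr (1 - z ^+ _).
by rewrite mulnS add2n.
Qed.

Lemma ev_Op h (z : algC) (pz : ((2 * h).+1).-primitive_root z) : ev z (Op (2 * h) h) = Pi h z.
Proof.
rewrite /Pi (reindex_inj (tau_inj h)) /=.
have E : forall j : 'I_((2 * h).+1), (((2 * j).+1 %% (2 * h).+1) != 0)%N = (j != h :> nat).
  move=> j; have hl : (h < (2 * h).+1)%N by rewrite ltnS -{1}(mul1n h) leq_mul2r orbT.
  congr negb; apply/eqP/eqP => [H|->]; last by rewrite modnn.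
  have : tau h j = tau h (Ordinal hl) by apply: val_inj; rewrite /= H modnn.
  by move/(@tau_inj h) => ->.
under eq_bigl => j do rewrite E /=.
under eq_bigr => j _ do rewrite (prim_expr_mod pz).
rewrite /Op ev_prod; apply: eq_bigr => i _; by rewrite ev_1mX.
Qed.



Lemma evCE h z : ((2 * h).+1).-primitive_root z ->
  ev z (qb (2 * (2 * h).+1) (2 * h).+1) = ev z (Ep (2 * h)).
Proof.
move=> pz; have K := Key2 (2 * h) h erefl.
have H : ev z (qb (2 * (2 * h).+1) (2 * h).+1 * Pe (2 * h)) = ev z (Op (2 * h) h * Ep (2 * h)) by rewrite K.
rewrite 2!ev_M (ev_Pe h z pz) (ev_Op h z pz) [Pi h z * _]mulrC in H.
exact: (mulIf (Pi_nz h z pz) H).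
Qed.

Lemma Phi_dvd n z (pz : n.-primitive_root z) (M : {poly rat}) :
  ev z M = 0 -> Phi n %| M.
Proof.
move=> HM.
have [p [Dp _] dv] := minCpolyP z.
have E1 := minCpoly_cyclotomic pz.
rewrite -(Cintr_Cyclotomic pz) Dp in E1.
have E2 : map_poly ratr (Phi n) = map_poly (intr : int -> algC) 'Phi_n.
  rewrite /Phi -map_poly_comp; apply: eq_map_poly => a /=; by rewrite rmorph_int.
rewrite -E2 in E1.
have -> : Phi n = p.
  apply: (map_inj_poly (fmorph_inj (ratr : {rmorphism rat -> algC}))) => //.
  by rewrite rmorph0.
have H : root (map_poly (ratr : rat -> algC) M) z by apply/eqP.
by move: H; rewrite dv.
Qed.

Lemma Phi_root n (z x : algC) (pz : n.-primitive_root z) :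
  ev x (Phi n) = 0 -> n.-primitive_root x.
Proof.
have E2 : map_poly ratr (Phi n) = map_poly (intr : int -> algC) 'Phi_n.
  rewrite /Phi -map_poly_comp; apply: eq_map_poly => a /=; by rewrite rmorph_int.
by rewrite E2 (Cintr_Cyclotomic pz) => H; rewrite -(root_cyclotomic pz) /root H.
Qed.

Lemma neg1_neq1 : (-1 : algC) != 1.
Proof. by rewrite eq_sym -subr_eq0 opprK -(natrD _ 1 1) pnatr_eq0. Qed.

Lemma P_root n (z x : algC) (pz : n.-primitive_root z) : (1 < n)%N ->
  ev x (qintp n ^+ 2 * Phi n) = 0 -> x ^+ n = 1 /\ x != 1.
Proof.
move=> n1; rewrite ev_M ev_Xn => /eqP; rewrite mulf_eq0 expf_eq0 /= => /orP [/eqP H|/eqP H].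
  rewrite ev_qintp in H.
  have Hx : x ^+ n = 1 by apply/eqP; rewrite -subr_eq0 subrX1 H mulr0.
  split => //; apply/eqP => x1; move: H; rewrite x1.
  under eq_bigr => i _ do rewrite expr1n.
  by rewrite sumr_const card_ord => /eqP; rewrite pnatr_eq0 => /eqP n0; rewrite n0 in n1.
have px := Phi_root n z x pz H.
split; first exact: prim_expr_order px.
apply/eqP => x1; rewrite x1 in px.
have := prim_order_dvd px 1; rewrite expr1n eqxx => /dvdn_leq => /(_ isT).
by rewrite leqNgt n1.
Qed.

Lemma nz_1pX (x : algC) n k : odd n -> x ^+ n = 1 -> 1 + x ^+ k != 0.
Proof.
move=> on xn; apply/negP => /eqP H.
have Hk : x ^+ k = -1 by apply/eqP; rewrite -addr_eq0 addrC H.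
have : (x ^+ k) ^+ n = 1 by rewrite exprAC xn expr1n.
by rewrite Hk -signr_odd on expr1 => /eqP; rewrite (negPf neg1_neq1).
Qed.

Lemma W_facts (z : algC) n : (0 < n)%N -> z ^+ n = 1 -> z != 1 ->
  ev z (qintp (2 * n).-1) * z = -1.
Proof.
move=> n0 zn z1; rewrite ev_qintp.
set S := \sum_(i < _) _.
have H1 : z ^+ (2 * n).-1 - 1 = (z - 1) * S by rewrite subrX1.
have H2 : z ^+ (2 * n).-1 * z = 1.
  by rewrite -exprSr prednK ?muln_gt0 // mulnC exprM zn expr1n.
have H3 : (z - 1) * (S * z + 1) = 0.
  by rewrite mulrDr mulrA -H1 mulrBl H2 mul1r mulr1 addrA subrK subrr.
move/eqP: H3; rewrite mulf_eq0 subr_eq0 (negPf z1) /= addr_eq0 => /eqP //.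
Qed.

Lemma W_nz (z : algC) n : (0 < n)%N -> z ^+ n = 1 -> z != 1 -> ev z (qintp (2 * n).-1) != 0.
Proof.
move=> n0 zn z1; apply/eqP => H; have := W_facts z n n0 zn z1.
by rewrite H mul0r => /eqP; rewrite eq_sym oppr_eq0 oner_eq0.
Qed.

Lemma W_sq (z : algC) n l : z ^+ n = 1 -> z != 1 -> l.+2 = n ->
  ev z (qintp (2 * n).-1) ^+ 2 = z ^+ l.
Proof.
move=> zn z1 Hl.
have n0 : (0 < n)%N by rewrite -Hl.
have z0 : z != 0 by apply/eqP => z0; move: zn; rewrite z0 expr0n -Hl => /eqP; rewrite eq_sym oner_eq0.
have := W_facts z n n0 zn z1 => H.
apply: (mulIf (expf_neq0 2 z0)).
by rewrite -exprMn H -exprD addn2 Hl zn sqrrN expr1n.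
Qed.

Lemma odd_n h : odd (2 * h).+1. Proof. by rewrite /= mul2n odd_double. Qed.

Lemma Ep_nz (x : algC) h : x ^+ (2 * h).+1 = 1 -> ev x (Ep (2 * h)) != 0.
Proof.
move=> xn; rewrite /Ep ev_M ev_Xn ev_1pX mulf_neq0 ?expf_neq0 //; last first.
  by rewrite (nz_1pX _ _ _ _ xn) // odd_n.
rewrite /Gp ev_prod prodf_seq_neq0; apply/allP => i _ /=.
by rewrite ev_1pX (nz_1pX _ _ _ _ xn) // odd_n.
Qed.

Lemma Div1 h : Phi (2 * h).+1 %| qb (2 * (2 * h).+1) (2 * h).+1 ^+ 2 - 'X^((2 * h).+1) * Ep (2 * h) ^+ 2.
Proof.
have [z pz] := C_prim_root_exists (n_gt0 h).
apply: (Phi_dvd _ _ pz).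
rewrite ev_B ev_Xn (ev_M z ('X^((2*h).+1)) (Ep (2*h) ^+ 2)) ev_X ev_Xn (evCE h z pz) (prim_expr_order pz) mul1r.
by rewrite subrr.
Qed.

Lemma Div2 h l : l.+2 = (2 * h).+1 ->
  Phi (2 * h).+1 %| Ep (2 * h) ^+ 2 * qintp (2 * (2 * h).+1).-1 ^+ 2 - 'X^l * qb (2 * (2 * h).+1) (2 * h).+1 ^+ 2.
Proof.
move=> Hl; have [z pz] := C_prim_root_exists (n_gt0 h).
apply: (Phi_dvd _ _ pz).
have z1 : z != 1.
  apply/eqP => z1; rewrite z1 in pz.
  have := prim_order_dvd pz 1; rewrite expr1n eqxx => /dvdn_leq => /(_ isT).
  by rewrite -Hl.
rewrite ev_B (ev_M z (Ep _ ^+ 2)) (ev_M z ('X^l)) ev_X !ev_Xn (evCE h z pz).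
rewrite (W_sq z _ l (prim_expr_order pz) z1 Hl).
by rewrite mulrC subrr.
Qed.

Lemma cop_crit (D P : {poly rat}) :
  (forall x : algC, ev x P = 0 -> ev x D != 0) -> coprimep D P.
Proof.
move=> H; rewrite -(coprimep_map (ratr : {rmorphism rat -> algC})) coprimep_sym.
apply: Pdiv.ClosedField.root_coprimep => x /eqP Hx.
exact: H.
Qed.

Lemma n1_of h : (0 < h)%N -> (1 < (2 * h).+1)%N.
Proof. by move=> h0; rewrite ltnS muln_gt0. Qed.

Lemma x_nz (x : algC) n : (0 < n)%N -> x ^+ n = 1 -> x != 0.
Proof. by move=> n0 xn; apply/eqP => x0; move: xn; rewrite x0 expr0n eqn0Ngt n0 /= => /eqP; rewrite eq_sym oner_eq0. Qed.

Lemma Cop1 h : (0 < h)%N ->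
  coprimep ('X^(2 * h) * Ep (2 * h) ^+ 2) (qintp (2 * h).+1 ^+ 2 * Phi (2 * h).+1).
Proof.
move=> h0; have [z pz] := C_prim_root_exists (n_gt0 h).
apply: cop_crit => x Hx.
have [xn x1] := P_root _ z x pz (n1_of h h0) Hx.
rewrite ev_M ev_X ev_Xn mulf_neq0 ?expf_neq0 //.
  exact: (x_nz x _ (n_gt0 h) xn).
exact: Ep_nz.
Qed.

Lemma Cop2 h : (0 < h)%N ->
  coprimep (Ep (2 * h) ^+ 2 * qintp (2 * (2 * h).+1).-1 ^+ 2) (qintp (2 * h).+1 ^+ 2 * Phi (2 * h).+1).
Proof.
move=> h0; have [z pz] := C_prim_root_exists (n_gt0 h).
apply: cop_crit => x Hx.
have [xn x1] := P_root _ z x pz (n1_of h h0) Hx.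
rewrite (ev_M x (Ep _ ^+ 2)) !ev_Xn mulf_neq0 ?expf_neq0 //.
  exact: Ep_nz.
exact: W_nz.
Qed.


Lemma tof_nz (p : {poly rat}) : p != 0 -> tof p != 0.
Proof. by rewrite tofrac_eq0. Qed.
Lemma qq_nz : qq != 0.
Proof. by rewrite /qq tof_nz // polyX_eq0. Qed.
Lemma tofX k : tof ('X^k : {poly rat}) = qq ^+ k.
Proof. by rewrite rmorphXn. Qed.
Lemma tof1mX k : tof (1 - 'X^k : {poly rat}) = 1 - qq ^+ k.
Proof. by rewrite rmorphB rmorph1 /= tofX. Qed.
Lemma tof1pX k : tof (1 + 'X^k : {poly rat}) = 1 + qq ^+ k.
Proof. by rewrite rmorphD rmorph1 /= tofX. Qed.
Lemma nz1mq k : 1 - qq ^+ k.+1 != 0.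
Proof. by rewrite -tof1mX tof_nz // nz_at0 // BX0. Qed.
Lemma nz1pq k : 1 + qq ^+ k.+1 != 0.
Proof. by rewrite -tof1pX tof_nz // nz_at0 // BX0'. Qed.
Lemma nz1q : 1 - qq != 0.
Proof. by have := nz1mq 0; rewrite expr1. Qed.

Lemma qpochS a b k : qpoch a b k.+1 = qpoch a b k * (1 - a * b ^+ k).
Proof. by rewrite /qpoch big_ord_recr. Qed.

Lemma QPo k : qpoch qq (qq ^+ 2) k = tof (Po k).
Proof.
rewrite /qpoch /Po rmorph_prod /=; apply: eq_bigr => i _.
by rewrite tof1mX -exprM -exprS.
Qed.
Lemma QPe k : qpoch (qq ^+ 2) (qq ^+ 2) k = tof (Pe k).
Proof.
rewrite /qpoch /Pe rmorph_prod /=; apply: eq_bigr => i _.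
by rewrite tof1mX -exprM -exprD add2n.
Qed.
Lemma QPinv k : qpoch qq^-1 (qq ^+ 2) k.+1 = (1 - qq^-1) * qpoch qq (qq ^+ 2) k.
Proof.
rewrite /qpoch big_ord_recl /= expr0 mulr1; congr (_ * _); apply: eq_bigr => i _.
by rewrite /bump /= add1n exprS mulrA expr2 mulKf // qq_nz.
Qed.
Lemma tof_qintp k : tof (qintp k) * (1 - qq) = 1 - qq ^+ k.
Proof.
have H : qintp k * (1 - 'X) = 1 - 'X^k.
  by rewrite -[1 - 'X^k]opprB subrX1 -mulNr opprB mulrC.
by move: (congr1 tof H); rewrite rmorphM rmorphB rmorph1 /= tof1mX.
Qed.
Lemma b_nz k : qpoch (qq ^+ 2) (qq ^+ 2) k != 0.
Proof. by rewrite QPe tof_nz // Pe_nz. Qed.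

Lemma fb (F : fieldType) (u v : F) : u != 0 -> v != 0 -> u / u = (u / v)^+2 * (v / u)^+2.
Proof. move=> *; field; by apply/andP. Qed.

Lemma fid1 (F : fieldType) (q x y a b : F) : q != 0 -> y != 0 -> 1 - q != 0 -> 1 - q^+2 * x != 0 -> b != 0 ->
  y^-1 * (a/b)^+2 * ((1-x)/(1-q))^+2 + (1 - q*x^+2)/(1-q) * (a^+2/b^+2) * (q*y)^-1
  = (q*y)^-1 * ((a*(1-q*x))/(b*(1-q^+2*x)))^+2 * ((1-q^+2*x)/(1-q))^+2.
Proof. move=> H1 H2 H3 H4 H5; field; by rewrite H1 H2 H3 H4 H5. Qed.

Definition T1 (k : nat) : RF := qint (4 * k + 1)%N
           * (qpoch qq (qq ^+ 2) k ^+ 2 / qpoch (qq ^+ 2) (qq ^+ 2) k ^+ 2)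
           * qq ^ (- (k : int)).

Lemma S1_closed m : \sum_(k < m.+1) T1 k =
  (qq ^+ m)^-1 * (qpoch qq (qq ^+ 2) m.+1 / qpoch (qq ^+ 2) (qq ^+ 2) m.+1) ^+ 2
  * ((1 - (qq ^+ 2) ^+ m.+1) / (1 - qq)) ^+ 2.
Proof.
elim: m => [|m IH].
  rewrite big_ord1 /T1 /= /qint /qpoch !big_ord1 !big_ord0 -exprnP oppr0 expr0z !expr0 !mulr1 !expr1 expr1n invr1 !mul1r mulr1.
  by apply: fb; [apply: nz1q | apply: (nz1mq 1)].
rewrite big_ord_recr IH /T1 /=.
rewrite !(qpochS _ _ m.+1) /qint -exprnP -exprnN.
set x := (qq ^+ 2) ^+ m.+1.
have Ex : qq ^+ (4 * m.+1 + 1)%N = qq * x ^+ 2.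
  by rewrite /x -!exprM -exprS; congr (_ ^+ _); lia.
have Ex2 : (qq ^+ 2) ^+ m.+2 = qq ^+ 2 * x by rewrite exprS.
rewrite Ex Ex2 [qq ^+ m.+1]exprS.
apply: fid1.
- exact: qq_nz.
- by rewrite expf_neq0 // qq_nz.
- exact: nz1q.
- by rewrite -Ex2 -exprM mulnS add2n nz1mq.
- exact: b_nz.
Qed.

Lemma fid2 (F : fieldType) (q w u a b : F) : q != 0 -> 1 - q != 0 -> 1 - q^+2 * w != 0 -> b != 0 ->
  - (u / q) * (a / b) ^+ 2 + (1 - q ^+ 3 * w ^+ 2) / (1 - q) * (((1 - q^-1) * a) ^+ 2 / (b * (1 - q ^+ 2 * w)) ^+ 2) * (q * u)
  = - ((q * u) / q) * ((a * (1 - q * w)) / (b * (1 - q ^+ 2 * w))) ^+ 2.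
Proof. move=> H1 H2 H3 H4; field; by rewrite H1 H2 H3 H4. Qed.

Lemma fb2 (F : fieldType) (q : F) : q != 0 -> 1 - q != 0 ->
  (1 - q^-1) / (1 - q) * (1 ^+ 2 / 1 ^+ 2) * q ^+ 0 = - (q ^+ 0 / q) * (1 / 1) ^+ 2.
Proof. by move=> H1 H2; field; rewrite H1 H2 oner_eq0. Qed.

Definition T2 (k : nat) : RF := qint (4 * (k : int) - 1)
           * (qpoch qq^-1 (qq ^+ 2) k ^+ 2 / qpoch (qq ^+ 2) (qq ^+ 2) k ^+ 2)
           * qq ^+ k.

Lemma S2_closed m : \sum_(k < m.+1) T2 k =
  - (qq ^+ m / qq) * (qpoch qq (qq ^+ 2) m / qpoch (qq ^+ 2) (qq ^+ 2) m) ^+ 2.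
Proof.
elim: m => [|m IH].
  rewrite big_ord1 /T2 /= /qint /qpoch !big_ord0 mulr0 sub0r exprN1.
  by apply: fb2; [exact: qq_nz | exact: nz1q].
rewrite big_ord_recr IH /T2 /=.
have E4 : 4 * (m.+1 : int) - 1 = Posz (4 * m + 3)%N by lia.
rewrite E4 /qint -exprnP QPinv !(qpochS _ _ m).
set w := (qq ^+ 2) ^+ m.
have Ex : qq ^+ (4 * m + 3)%N = qq ^+ 3 * w ^+ 2.
  by rewrite /w -!exprM -exprD; congr (_ ^+ _); lia.
rewrite Ex [qq ^+ m.+1]exprS.
apply: fid2.
- exact: qq_nz.
- exact: nz1q.
- by rewrite /w -exprM -exprD add2n nz1mq.
- exact: b_nz.
Qed.


Lemma fid3 (F : fieldType) (q y p s c e t : F) : q != 0 -> y != 0 -> 1 - q != 0 -> s != 0 -> e != 0 -> 1 + q * y != 0 ->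
 p * (e * (1 + q * y)) = c * s -> t * (1 - q) = 1 - q * y ->
 y^-1 * (p / s) ^+ 2 * ((1 - (q * y) ^+ 2) / (1 - q)) ^+ 2 - q * ((1 - q * y) / (1 - q)) ^+ 2
   = t ^+ 2 * (c ^+ 2 - q * y * e ^+ 2) / (y * e ^+ 2).
Proof.
move=> H1 H2 H3 H4 H5 H6 Hp Ht.
have -> : p = c * s / (e * (1 + q * y)) by rewrite -Hp mulfK // mulf_neq0.
have -> : t = (1 - q * y) / (1 - q) by rewrite -Ht mulfK.
by field; rewrite ?H1 ?H2 ?H3 ?H4 ?H5 ?H6.
Qed.

Lemma fid4 (F : fieldType) (q y p s c e t w o v z : F) : q != 0 -> 1 - q != 0 -> s != 0 -> e != 0 -> w != 0 ->
 p * (1 - v) = (1 - z) * o -> c * s = o * e -> w * (1 - q) = 1 - v -> t * (1 - q) = 1 - z ->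
 - ((q * y) / q) * (p / s) ^+ 2 - - ((1 - z) / (1 - q)) ^+ 2
   = t ^+ 2 * (e ^+ 2 * w ^+ 2 - y * c ^+ 2) / (e ^+ 2 * w ^+ 2).
Proof.
move=> H1 H2 H3 H4 H5 Hp Hc Hw Ht.
have Hv : 1 - v != 0 by rewrite -Hw mulf_neq0.
have -> : p = (1 - z) * o / (1 - v) by rewrite -Hp mulfK.
have -> : o = c * s / e by rewrite Hc mulfK.
have -> : t = (1 - z) / (1 - q) by rewrite -Ht mulfK.
rewrite -Hw.
by field; rewrite ?H1 ?H2 ?H3 ?H4 ?H5 ?Hv.
Qed.

Lemma qintp_mul k : qintp k * (1 - 'X) = 1 - 'X^k.
Proof. by rewrite -[1 - 'X^k]opprB subrX1 -mulNr opprB mulrC. Qed.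

Lemma qintp_nz k : qintp k.+1 != 0.
Proof.
apply/eqP => H; have := qintp_mul k.+1; rewrite H mul0r => /esym/eqP.
by apply/negP; apply: nz_at0; apply: BX0.
Qed.

Lemma Ep_nzp m : Ep m != 0.
Proof.
apply: nz_at0; rewrite /Ep hornerM horner_exp BX0'.
have : (Gp m).[0] = 1 by apply: prod_at0 => i; apply: BX0'.
by move=> ->; rewrite expr1n mulr1.
Qed.

Theorem theorem1 (n : nat) : odd n -> (1 < n)%N ->
  qcong (\sum_(k < n) qint (4 * k + 1)%N
           * (qpoch qq (qq ^+ 2) k ^+ 2 / qpoch (qq ^+ 2) (qq ^+ 2) k ^+ 2)
           * qq ^ (- (k : int)))
        (qq * qint n ^+ 2) (qintp n ^+ 2 * Phi n)
  /\
  qcong (\sum_(k < n) qint (4 * (k : int) - 1)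
           * (qpoch qq^-1 (qq ^+ 2) k ^+ 2 / qpoch (qq ^+ 2) (qq ^+ 2) k ^+ 2)
           * qq ^+ k)
        (- qint n ^+ 2) (qintp n ^+ 2 * Phi n).
Proof.
move=> on n1.
set h := n./2.
have Hn : n = (2 * h).+1 by rewrite /h -[n in LHS]odd_double_half on mul2n.
have h0 : (0 < h)%N by move: n1; rewrite Hn ltnS muln_gt0.
have E1 : \sum_(k < n) qint (4 * k + 1)%N
           * (qpoch qq (qq ^+ 2) k ^+ 2 / qpoch (qq ^+ 2) (qq ^+ 2) k ^+ 2)
           * qq ^ (- (k : int)) = \sum_(k < (2 * h).+1) T1 k by rewrite Hn.
have E2 : \sum_(k < n) qint (4 * (k : int) - 1)
           * (qpoch qq^-1 (qq ^+ 2) k ^+ 2 / qpoch (qq ^+ 2) (qq ^+ 2) k ^+ 2)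
           * qq ^+ k = \sum_(k < (2 * h).+1) T2 k by rewrite Hn.
rewrite E1 E2 S1_closed S2_closed; clear E1 E2.
rewrite Hn.
split.
- exists (qintp (2 * h).+1 ^+ 2 * (qb (2 * (2 * h).+1) (2 * h).+1 ^+ 2 - 'X^((2 * h).+1) * Ep (2 * h) ^+ 2)).
  exists ('X^(2 * h) * Ep (2 * h) ^+ 2).
  split.
  + by rewrite mulf_neq0 ?expf_neq0 ?polyX_eq0 ?Ep_nzp.
  + exact: Cop1.
  + by rewrite dvdp_mul ?dvdpp ?Div1.
  + set m := (2 * h)%N.
    have K : Po m.+1 * (Ep m * (1 + 'X^(m.+1))) = qb (2 * m.+1) m.+1 * Pe m.+1.
      by rewrite -Key1 GpS /Ep; ring.
    have Kt : tof (Po m.+1) * (tof (Ep m) * (1 + qq * qq ^+ m)) = tof (qb (2 * m.+1) m.+1) * tof (Pe m.+1).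
      by rewrite -exprS -tof1pX -!tofracM K.
    have Ht := tof_qintp m.+1.
    rewrite exprS in Ht.
    rewrite QPo QPe /qint -exprnP.
    rewrite (tofracM (qintp _ ^+ 2)) (tofracM ('X^_)) tofracB (tofracM ('X^_)) !tofracXn.
    rewrite [(qq ^+ 2) ^+ _]exprAC [qq ^+ m.+1]exprS.
    apply: fid3 => //.
    * exact: qq_nz.
    * by rewrite expf_neq0 // qq_nz.
    * exact: nz1q.
    * by apply: tof_nz; apply: Pe_nz.
    * by apply: tof_nz; apply: Ep_nzp.
    * by rewrite -exprS nz1pq.
- set m := (2 * h)%N.
  set l := (2 * h).-1.
  have Hl : l.+2 = (2 * h).+1 by rewrite /l; lia.
  have Hl' : l.+1 = m by rewrite /l /m; lia.
  exists (qintp m.+1 ^+ 2 * (Ep m ^+ 2 * qintp (2 * m.+1).-1 ^+ 2 - 'X^l * qb (2 * m.+1) m.+1 ^+ 2)).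
  exists (Ep m ^+ 2 * qintp (2 * m.+1).-1 ^+ 2).
  have E2m : (2 * m.+1).-1 = (2 * m).+1 by rewrite mulnS.
  split.
  + by rewrite mulf_neq0 ?expf_neq0 ?Ep_nzp // E2m qintp_nz.
  + exact: Cop2.
  + by rewrite dvdp_mul ?dvdpp ?(Div2 h l Hl).
  + have Hp : tof (Po m) * (1 - qq ^+ (2 * m).+1) = (1 - qq ^+ m.+1) * tof (Op m h).
      by rewrite -!tof1mX -!tofracM -PoS (Po_split m h erefl).
    have Hc : tof (qb (2 * m.+1) m.+1) * tof (Pe m) = tof (Op m h) * tof (Ep m).
      by rewrite -!tofracM (Key2 m h erefl).
    have Hw := tof_qintp (2 * m.+1).-1.
    rewrite E2m in Hw.
    have Ht := tof_qintp m.+1.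
    rewrite QPo QPe /qint -exprnP.
    rewrite (tofracM (qintp _ ^+ 2)) (tofracM (Ep _ ^+ 2)) tofracB (tofracM (Ep _ ^+ 2)) (tofracM ('X^_)) !tofracXn.
    rewrite E2m -{1}Hl' exprS.
    apply: fid4 Hp Hc Hw Ht.
    * exact: qq_nz.
    * exact: nz1q.
    * by apply: tof_nz; apply: Pe_nz.
    * by apply: tof_nz; apply: Ep_nzp.
    * by apply: tof_nz; apply: qintp_nz.
Qed.
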